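(* Let $J_1,J_2$ be either (i) Lennard-Jones potentials: $J_1(z)=\frac{k_1}{z^{12}}-\frac{k_2}{z^6}$ for $z>0$, $J_1(z)=+\infty$ for $z\le0$, with $k_1,k_2>0$, and $J_2(z)=J_1(2z)$; or (ii) Morse potentials: $J_1(z)=k_1\big(1-e^{-k_2(z-\delta_1)}\big)^2-k_1$ for $z\in\mathbb R$ with $\delta_1,k_1,k_2>0$, and $J_2(z)=J_1(2z)$. Let $\delta_1$ be the unique minimizer of $J_1$ and $\gamma$ the unique minimizer of $J_0$. Then $J_1(\gamma)<0$, $J_2(\gamma)<0$, $J_2(\delta_1)<0$, $J_2(\gamma)>2J_2\big(\frac{\delta_1+\gamma}{2}\big)$, and $$R(t):=J_2\Big(\frac{\gamma+t}{2}\Big)+\frac12\big(J_1(\gamma)+J_1(t)\big)-J_0(\gamma)-\frac32\big(J_{CB}(t)-J_0(\gamma)\big)\le0\quad\text{for all }t\in\operatorname{dom}J_1.$$ Furthermore, for every $\theta>0$ there exists $\eta_\theta>0$ such that $J_2\big(\frac{t+\gamma}{2}\big)<0$ for all $t\in\operatorname{dom}J_1$ with $J_1(t)<J_1(\theta)+2\eta_\theta$.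
   Context: $J_{CB}:=J_1+J_2$; $J_0(z):=J_2(z)+\frac12\inf\{J_1(z_1)+J_1(z_2):z_1+z_2=2z\}$. It is known (from prior work) that these potentials satisfy the standing hypotheses of the paper; in particular $J_0$ has a unique minimizer $\gamma>0$, which coincides with the unique minimizer of $J_{CB}$, and $J_0(\gamma)=J_{CB}(\gamma)$. *)

(* Defs.v *)
From Stdlib Require Import Reals Lra ClassicalEpsilon.
Open Scope R_scope.

Inductive potential : Type :=
  | LennardJones (k1 k2 : R)
  | MorsePot (d1 k1 k2 : R).

Definition valid (p : potential) : Prop :=
  match p with
  | LennardJones k1 k2 => 0 < k1 /\ 0 < k2
  | MorsePot d1 k1 k2 => 0 < d1 /\ 0 < k1 /\ 0 < k2
  end.

Definition dom (p : potential) (z : R) : Prop :=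
  match p with
  | LennardJones _ _ => 0 < z
  | MorsePot _ _ _ => True
  end.

(* Real-valued J1; outside [dom p] (value +oo in the paper) the value
   is an irrelevant placeholder and is never used. *)
Definition J1 (p : potential) (z : R) : R :=
  match p with
  | LennardJones k1 k2 => k1 / z ^ 12 - k2 / z ^ 6
  | MorsePot d1 k1 k2 => k1 * (1 - exp (- k2 * (z - d1))) ^ 2 - k1
  end.

Definition J2 (p : potential) (z : R) : R := J1 p (2 * z).

Definition JCB (p : potential) (z : R) : R := J1 p z + J2 p z.

Definition is_lb (E : R -> Prop) (m : R) : Prop := forall x, E x -> m <= x.
Definition is_glb (E : R -> Prop) (m : R) : Prop :=
  is_lb E m /\ (forall b, is_lb E b -> b <= m).
Definition Rinf (E : R -> Prop) : R :=
  epsilon (inhabits 0) (fun m => is_glb E m).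

(* J0(z) = J2(z) + 1/2 inf { J1 z1 + J1 z2 : z1 + z2 = 2 z }, the infimum
   being over pairs with finite value, i.e. z1, z2 in dom J1. *)
Definition J0 (p : potential) (z : R) : R :=
  J2 p z + / 2 * Rinf (fun s => exists z1 z2, dom p z1 /\ dom p z2 /\
                                  z1 + z2 = 2 * z /\ s = J1 p z1 + J1 p z2).

Definition unique_minimizer (p : potential) (f : R -> R) (x : R) : Prop :=
  dom p x /\ forall z, dom p z -> z <> x -> f x < f z.

(* Main.v *)
Require Import Defs.
From Stdlib Require Import Reals Lra Lia Psatz ClassicalEpsilon.
Open Scope R_scope.


Lemma pow_lt_mono (x y : R) (n : nat) : 0 <= x < y -> (0 < n)%nat -> x ^ n < y ^ n.
Proof.
  intros [Hx Hxy] Hn. induction n as [|n IH]; [lia|].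
  destruct n as [|n]; [simpl; lra|].
  assert (H := IH ltac:(lia)).
  change ((S (S n))) with (1 + S n)%nat.
  rewrite !pow_add. simpl (x^1). simpl (y^1).
  assert (0 <= x ^ S n) by (apply pow_le; lra).
  nra.
Qed.

Lemma exp_pow6 (r : R) : exp r ^ 6 = exp (6 * r).
Proof.
  simpl. rewrite Rmult_1_r, <- !exp_plus. f_equal. ring.
Qed.

Lemma glb_exists (E : R -> Prop) (L : R) :
  (exists x, E x) -> (forall x, E x -> L <= x) -> exists m, is_glb E m.
Proof.
  intros [x0 Hx0] HL.
  destruct (completeness (fun y => E (- y))) as [M [HM1 HM2]].
  - exists (- L). intros y Hy. apply HL in Hy. lra.
  - exists (- x0). rewrite Ropp_involutive. exact Hx0.
  - exists (- M). split.
    + intros x Hx. assert (HM := HM1 (- x)). cbv beta in HM. rewrite Ropp_involutive in HM.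
      apply HM in Hx. lra.
    + intros b Hb. assert (- b >= M) as H.
      { apply Rle_ge, HM2. intros y Hy. apply Hb in Hy. lra. }
      lra.
Qed.

Lemma Rinf_glb (E : R -> Prop) (L : R) :
  (exists x, E x) -> (forall x, E x -> L <= x) -> is_glb E (Rinf E).
Proof.
  intros H1 H2. unfold Rinf. apply epsilon_spec. eapply glb_exists; eauto.
Qed.

Definition Sset p z := fun s => exists z1 z2, dom p z1 /\ dom p z2 /\
                                  z1 + z2 = 2 * z /\ s = J1 p z1 + J1 p z2.

Lemma J0_unfold p z : J0 p z = J2 p z + / 2 * Rinf (Sset p z).
Proof. reflexivity. Qed.

Lemma ident (p : potential) (m zs gamma : R) :
  dom p zs -> JCB p zs <= m ->
  (forall z1 z2, dom p z1 -> dom p z2 -> m <= J1 p (z1 + z2) + / 2 * (J1 p z1 + J1 p z2)) ->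
  unique_minimizer p (J0 p) gamma ->
  gamma = zs /\ J0 p gamma = m.
Proof.
  intros Hzs Hm HW [Hg Hmin].
  assert (Hlow : forall z, dom p z -> m <= J0 p z /\ J0 p z <= JCB p z).
  { intros z Hz.
    assert (HG : is_glb (Sset p z) (Rinf (Sset p z))).
    { apply (Rinf_glb _ (2 * (m - J2 p z))).
      - exists (J1 p z + J1 p z), z, z. repeat split; auto. ring.
      - intros s [z1 [z2 [H1 [H2 [H3 H4]]]]]. subst s.
        assert (HJ : J2 p z = J1 p (z1 + z2)) by (unfold J2; rewrite H3; reflexivity).
        specialize (HW z1 z2 H1 H2). lra. }
    destruct HG as [HG1 HG2].
    rewrite J0_unfold. split.
    - assert (2 * (m - J2 p z) <= Rinf (Sset p z)).
      { apply HG2. intros s [z1 [z2 [H1 [H2 [H3 H4]]]]]. subst s.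
        assert (HJ : J2 p z = J1 p (z1 + z2)) by (unfold J2; rewrite H3; reflexivity).
        specialize (HW z1 z2 H1 H2). lra. }
      lra.
    - assert (Rinf (Sset p z) <= J1 p z + J1 p z).
      { apply HG1. exists z, z. repeat split; auto. ring. }
      unfold JCB. lra. }
  destruct (Req_dec gamma zs) as [E|E].
  - subst. split; auto. destruct (Hlow zs Hzs). lra.
  - exfalso. specialize (Hmin zs Hzs (not_eq_sym E)).
    destruct (Hlow zs Hzs). destruct (Hlow gamma Hg). lra.
Qed.

Lemma ident1 (p : potential) (zd delta1 : R) :
  dom p zd -> (forall z, dom p z -> J1 p zd <= J1 p z) ->
  unique_minimizer p (J1 p) delta1 -> delta1 = zd.
Proof.
  intros Hz Hm [Hd Hmin]. destruct (Req_dec delta1 zd) as [E|E]; auto.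
  exfalso. specialize (Hmin zd Hz (not_eq_sym E)). specialize (Hm delta1 Hd). lra.
Qed.

Definition Concl (p : potential) (delta1 gamma : R) : Prop :=
  J1 p gamma < 0 /\
  J2 p gamma < 0 /\
  J2 p delta1 < 0 /\
  J2 p gamma > 2 * J2 p ((delta1 + gamma) / 2) /\
  (forall t, dom p t ->
     J2 p ((gamma + t) / 2) + / 2 * (J1 p gamma + J1 p t) - J0 p gamma
       - 3 / 2 * (JCB p t - J0 p gamma) <= 0) /\
  (forall theta, 0 < theta ->
     exists eta, 0 < eta /\
       forall t, dom p t -> J1 p t < J1 p theta + 2 * eta ->
         J2 p ((t + gamma) / 2) < 0).

Definition fL (y : R) := y^2 - y.
Definition aL := 2080/4097.

Lemma div_nonneg (a b : R) : 0 <= a -> 0 < b -> 0 <= a / b.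
Proof. intros. unfold Rdiv. apply Rmult_le_pos; [lra| left; apply Rinv_0_lt_compat; lra]. Qed.

Definition YL (k1 k2 z : R) := k1 / (k2 * z^6).

Lemma J1L (k1 k2 z : R) : 0 < k1 -> 0 < k2 -> 0 < z ->
  J1 (LennardJones k1 k2) z = (k2^2/k1) * fL (YL k1 k2 z).
Proof.
  intros. simpl. unfold fL, YL. assert (0 < z^6) by (apply pow_lt; lra).
  field. repeat split; lra.
Qed.

Lemma Y2L (k1 k2 z : R) : 0 < k2 -> 0 < z -> YL k1 k2 (2*z) = YL k1 k2 z / 64.
Proof.
  intros. unfold YL. assert (0 < z^6) by (apply pow_lt; lra). field. lra.
Qed.

Lemma J2L (k1 k2 z : R) : 0 < k1 -> 0 < k2 -> 0 < z ->
  J2 (LennardJones k1 k2) z = (k2^2/k1) * fL (YL k1 k2 z / 64).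
Proof.
  intros. unfold J2. rewrite J1L by lra. rewrite Y2L by lra. reflexivity.
Qed.

Lemma YL_pos (k1 k2 z : R) : 0 < k1 -> 0 < k2 -> 0 < z -> 0 < YL k1 k2 z.
Proof.
  intros. unfold YL. apply Rdiv_lt_0_compat; auto.
  apply Rmult_lt_0_compat; auto. apply pow_lt; lra.
Qed.

Lemma YL_mono (k1 k2 x y : R) : 0 < k1 -> 0 < k2 -> 0 < x < y -> YL k1 k2 y < YL k1 k2 x.
Proof.
  intros. unfold YL.
  assert (x^6 < y^6) by (apply pow_lt_mono; [lra|lia]).
  assert (0 < x^6) by (apply pow_lt; lra).
  unfold Rdiv. apply Rmult_lt_compat_l; auto.
  assert (0 < k2*x^6) by nra.
  apply Rinv_lt_contravar.
  - apply Rmult_lt_0_compat; nra.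
  - nra.
Qed.

Lemma YL_conv (k1 k2 z1 z2 : R) : 0 < k1 -> 0 < k2 -> 0 < z1 -> 0 < z2 ->
  2 * YL k1 k2 ((z1+z2)/2) <= YL k1 k2 z1 + YL k1 k2 z2.
Proof.
  intros Hk1 Hk2 Hz1 Hz2. set (c := (z1+z2)/2).
  assert (Hc : 0 < c) by (unfold c; lra).
  assert (Hzz : z1*z2 <= c^2) by (unfold c; assert (Hq:=pow2_ge_0 (z1-z2)); nra).
  assert (H6 : (z1*z2)^6 <= (c^2)^6) by (apply pow_incr; nra).
  assert (E1 : (z1*z2)^6 = z1^6 * z2^6) by ring.
  assert (E2 : (c^2)^6 = (c^6)^2) by ring.
  rewrite E1, E2 in H6.
  set (Z1 := z1^6) in *. set (Z2 := z2^6) in *. set (C := c^6) in *.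
  assert (0 < Z1) by (apply pow_lt; lra).
  assert (0 < Z2) by (apply pow_lt; lra).
  assert (0 < C) by (apply pow_lt; lra).
  assert (HC : 2*Z1*Z2 <= C*(Z1+Z2)).
  { assert (H4 : 4*Z1*Z2 <= (Z1+Z2)^2) by (assert (Hq:=pow2_ge_0 (Z1-Z2)); nra).
    assert (H5 : (2*Z1*Z2)^2 <= (C*(Z1+Z2))^2).
    { assert (0 <= Z1*Z2) by nra.
      assert (4*Z1*Z2 * (Z1*Z2) <= (Z1+Z2)^2 * C^2).
      { apply Rmult_le_compat; nra. }
      nra. }
    assert (0 <= C*(Z1+Z2)) by nra.
    assert (0 <= 2*Z1*Z2) by nra.
    destruct (Rle_lt_dec (2*Z1*Z2) (C*(Z1+Z2))) as [|Hl]; auto.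
    exfalso. assert ((C*(Z1+Z2))^2 < (2*Z1*Z2)^2) by (apply pow_lt_mono; [lra|lia]). lra. }
  unfold YL. fold Z1 Z2 C.
  assert (E : k1/(k2*Z1) + k1/(k2*Z2) - 2 * (k1/(k2*C)) = k1 * (C*(Z1+Z2) - 2*Z1*Z2)/(k2*Z1*Z2*C))
    by (field; lra).
  assert (0 <= k1 * (C*(Z1+Z2) - 2*Z1*Z2)/(k2*Z1*Z2*C)).
  { apply div_nonneg; [nra|]. repeat apply Rmult_lt_0_compat; lra. }
  lra.
Qed.

Lemma YL_pm (k1 k2 g t : R) : 0 < k1 -> 0 < k2 -> 0 < g -> 0 < t ->
  2 * YL k1 k2 g * YL k1 k2 t <= (YL k1 k2 g + YL k1 k2 t) * YL k1 k2 ((g+t)/2).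
Proof.
  intros Hk1 Hk2 Hg Ht. set (c := (g+t)/2).
  assert (Hc : 0 < c) by (unfold c; lra).
  assert (H2 : c^2 <= (g^2 + t^2)/2) by (unfold c; assert (Hq:=pow2_ge_0 (g-t)); nra).
  assert (H3 : (c^2)^3 <= ((g^2 + t^2)/2)^3) by (apply pow_incr; split; [nra|lra]).
  assert (H4 : ((g^2 + t^2)/2)^3 <= ((g^2)^3 + (t^2)^3)/2).
  { assert (0 <= g^2) by nra. assert (0 <= t^2) by nra.
    set (u := g^2) in *. set (v := t^2) in *.
    assert (E : ((u^3+v^3)/2) - ((u+v)/2)^3 = 3/8*(u+v)*(u-v)^2) by field.
    assert (0 <= (u-v)^2) by apply pow2_ge_0. nra. }
  replace ((c^2)^3) with (c^6) in H3 by ring.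
  replace ((g^2)^3) with (g^6) in H4 by ring.
  replace ((t^2)^3) with (t^6) in H4 by ring.
  set (G := g^6) in *. set (T := t^6) in *. set (C := c^6) in *.
  assert (0 < G) by (apply pow_lt; lra).
  assert (0 < T) by (apply pow_lt; lra).
  assert (0 < C) by (apply pow_lt; lra).
  unfold YL. fold G T C.
  assert (E : (k1/(k2*G) + k1/(k2*T)) * (k1/(k2*C)) - 2 * (k1/(k2*G)) * (k1/(k2*T))
     = k1^2 * (G + T - 2*C) / (k2^2*G*T*C)) by (field; lra).
  assert (0 <= k1^2 * (G + T - 2*C) / (k2^2*G*T*C)).
  { apply div_nonneg; [nra|]. assert (0 < k2^2) by nra. repeat apply Rmult_lt_0_compat; lra. }
  lra.
Qed.

Definition rt6 (x : R) := exp (ln x / 6).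
Lemma rt6_pow (x : R) : 0 < x -> rt6 x ^ 6 = x.
Proof. intros. unfold rt6. rewrite exp_pow6. replace (6 * (ln x / 6)) with (ln x) by field.
  apply exp_ln; auto. Qed.
Lemma rt6_pos (x : R) : 0 < rt6 x.
Proof. apply exp_pos. Qed.

Lemma YL_rt6 (k1 k2 v : R) : 0 < k1 -> 0 < k2 -> 0 < v -> YL k1 k2 (rt6 (k1/(k2*v))) = v.
Proof.
  intros. unfold YL. rewrite rt6_pow.
  - field. repeat split; lra.
  - apply Rdiv_lt_0_compat; auto. nra.
Qed.
Lemma PW (Y1 Y2 Yc : R) : 0 < Yc -> 0 < Y1 -> 0 < Y2 -> 2*Yc <= Y1+Y2 ->
  fL aL + fL (aL/64) <= fL (Yc/64) + /2*(fL Y1 + fL Y2).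
Proof.
  intros HYc HY1 HY2 HS. unfold fL, aL.
  destruct (Rle_lt_dec (1/2) Yc).
  - assert (H1:=pow2_ge_0 (Y1-Yc)). assert (H2:=pow2_ge_0 (Y2-Yc)).
    assert (H3:=pow2_ge_0 (Yc-aL)). unfold aL in H3.
    nra.
  - assert (H1:=pow2_ge_0 (Y1-1/2)). assert (H2:=pow2_ge_0 (Y2-1/2)).
    nra.
Qed.

Lemma PR (p Q : R) : 0 < p -> aL*p <= 32*(aL+p)*Q -> Q <= aL ->
  fL Q - fL p - 3/2 * fL (p/64) + fL aL + /2 * fL (aL/64) <= 0.
Proof.
  intros Hp Hql HQa. unfold aL in *.
  destruct (Rle_lt_dec Q (1/2)).
  - set (ql := 2080/4097*p/(32*(2080/4097+p))).
    assert (Hq : ql <= Q).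
    { unfold ql. apply Rmult_le_reg_r with (32*(2080/4097+p)). nra.
      field_simplify. nra. nra. }
    assert (0 <= ql) by (unfold ql; apply Rmult_le_pos; [nra| left; apply Rinv_0_lt_compat; nra]).
    assert (fL Q <= fL ql) by (unfold fL; nra).
    assert (E : fL ql - fL p - 3/2 * fL (p/64) + fL (2080/4097) + /2 * fL (2080/4097/64)
       = (p - 2080/4097)^2 * (-34091265/134283272 - 528643/524416 * p - 8195/8192 * p^2)
         / (2080/4097+p)^2).
    { unfold ql, fL. field. lra. }
    assert (0 <= (p - 2080/4097)^2) by apply pow2_ge_0.
    assert (0 < (2080/4097+p)^2) by (apply pow_lt; lra).
    assert ((p - 2080/4097)^2 * (-34091265/134283272 - 528643/524416 * p - 8195/8192 * p^2)
         / (2080/4097+p)^2 <= 0).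
    { unfold Rdiv. assert (0 <= p^2) by apply pow2_ge_0.
      assert (0 < / (2080/4097+p)^2) by (apply Rinv_0_lt_compat; lra).
      assert ((p - 2080/4097)^2 * (-34091265/134283272 - 528643/524416 * p - 8195/8192 * p^2) <= 0) by nra.
      nra. }
    lra.
  - assert (fL Q <= fL (2080/4097)) by (unfold fL; nra).
    unfold fL in *. assert (H2:=pow2_ge_0 (p - 1/2)). nra.
Qed.

Lemma main_LJ (k1 k2 delta1 gamma : R) : 0 < k1 -> 0 < k2 ->
  unique_minimizer (LennardJones k1 k2) (J1 (LennardJones k1 k2)) delta1 ->
  unique_minimizer (LennardJones k1 k2) (J0 (LennardJones k1 k2)) gamma ->
  Concl (LennardJones k1 k2) delta1 gamma.
Proof.
  intros Hk1 Hk2 Hd Hg.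
  set (p := LennardJones k1 k2) in *.
  set (K := k2^2/k1).
  assert (HK : 0 < K) by (unfold K; apply Rdiv_lt_0_compat; nra).
  set (Y := YL k1 k2).
  set (zd := rt6 (k1/(k2*(1/2)))).
  assert (Hzd : Y zd = 1/2) by (apply YL_rt6; lra).
  assert (Hdd : delta1 = zd).
  { apply (ident1 p); [apply rt6_pos| |exact Hd].
    intros z Hz. simpl in Hz. unfold p. rewrite !J1L by (auto; apply rt6_pos).
    fold K Y. rewrite Hzd. apply Rmult_le_compat_l; [lra|].
    unfold fL. assert (Hq := pow2_ge_0 (Y z - 1/2)). nra. }
  set (zs := rt6 (k1/(k2*aL))).
  assert (Hzs : Y zs = aL) by (apply YL_rt6; unfold aL; lra).
  destruct (ident p (K * (fL aL + fL (aL/64))) zs gamma) as [Hgs HJ0].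
  { apply rt6_pos. }
  { unfold JCB, p. rewrite J1L, J2L by (auto; apply rt6_pos). fold Y K. rewrite Hzs. lra. }
  { intros z1 z2 Hz1 Hz2. simpl in Hz1, Hz2. unfold p.
    rewrite !J1L by (auto; lra).
    replace (z1 + z2) with (2 * ((z1+z2)/2)) by field.
    rewrite Y2L by (auto; lra). fold K Y.
    assert (HPW := PW (Y z1) (Y z2) (Y ((z1+z2)/2))
      ltac:(apply YL_pos; auto; lra) ltac:(apply YL_pos; auto; lra) ltac:(apply YL_pos; auto; lra)
      ltac:(apply YL_conv; auto)).
    nra. }
  { exact Hg. }
  assert (Hgp : 0 < gamma) by (rewrite Hgs; apply rt6_pos).
  assert (Hdp : 0 < delta1) by (rewrite Hdd; apply rt6_pos).
  assert (HYg : Y gamma = aL) by (rewrite Hgs; exact Hzs).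
  assert (HYd : Y delta1 = 1/2) by (rewrite Hdd; exact Hzd).
  assert (Hgd : gamma < delta1).
  { destruct (Rlt_le_dec gamma delta1) as [|Hle]; auto. exfalso.
    destruct Hle as [Hlt|Heq].
    - assert (Y gamma < Y delta1) by (apply YL_mono; auto).
      rewrite HYg, HYd in *. unfold aL in *. lra.
    - rewrite <- Heq in HYg. rewrite HYg in HYd. unfold aL in *. lra. }
  unfold Concl. unfold p.
  rewrite !J1L, !J2L by (auto; lra). fold K Y.
  rewrite HYg, HYd.
  split; [|split; [|split; [|split; [|split]]]].
  - unfold fL, aL. nra.
  - unfold fL, aL. nra.
  - unfold fL. nra.
  -
    set (q := Y ((delta1 + gamma)/2)).
    assert (q < aL) by (rewrite <- HYg; apply YL_mono; auto; lra).
    assert (1/2 < q) by (rewrite <- HYd; apply YL_mono; auto; lra).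
    assert (fL (q/64) <= fL (1/2/64)) by (unfold fL, aL in *; nra).
    unfold fL, aL in *. nra.
  -
    intros t Ht. simpl in Ht. unfold JCB.
    unfold p in HJ0. rewrite HJ0. rewrite J1L, J2L, J2L by (auto; lra). fold K Y.
    set (Q := Y ((gamma + t)/2) / 64).
    assert (HQ1 : Q <= aL).
    { unfold Q, Y. rewrite <- Y2L by (auto; lra). fold Y.
      replace (2 * ((gamma+t)/2)) with (gamma + t) by field.
      rewrite <- HYg. left. apply YL_mono; auto; lra. }
    assert (HQ2 : aL * Y t <= 32 * (aL + Y t) * Q).
    { unfold Q. rewrite <- HYg. assert (H := YL_pm k1 k2 gamma t Hk1 Hk2 Hgp Ht). fold Y in H. lra. }
    assert (HPR := PR (Y t) Q ltac:(apply YL_pos; auto) HQ2 HQ1).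
    assert (E : K * fL Q + / 2 * (K * fL aL + K * fL (Y t)) - K * (fL aL + fL (aL / 64)) -
      3 / 2 * (K * fL (Y t) + K * fL (Y t / 64) - K * (fL aL + fL (aL / 64)))
      = K * (fL Q - fL (Y t) - 3/2 * fL (Y t/64) + fL aL + /2 * fL (aL/64))) by field.
    rewrite E. nra.
  -
    intros theta Hth. exists 1. split; [lra|].
    intros t Ht _. simpl in Ht. rewrite J2L by (auto; lra). fold K Y.
    unfold Y. rewrite <- Y2L by (auto; lra). fold Y.
    replace (2 * ((t+gamma)/2)) with (t + gamma) by field.
    assert (Y (t+gamma) < aL) by (rewrite <- HYg; apply YL_mono; auto; lra).
    assert (0 < Y (t+gamma)) by (apply YL_pos; auto; lra).
    assert (fL (Y (t+gamma)) < 0) by (unfold fL, aL in *; nra).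
    nra.
Qed.

Definition fM (y : R) := y^2 - 2*y.
Definition hM (B y : R) := fM (B*y^2) + fM y.
Definition gM (B y : R) := 2*B^2*y^3 + (1-2*B)*y - 1.

Lemma Ys_bounds (B Y : R) : 0 < B < 1 -> 0 < Y -> gM B Y = 0 ->
  1 < Y /\ Y < 2 /\ B*Y^2 < 1.
Proof.
  unfold gM. intros HB HY Hg.
  assert (H1 : 1 < Y).
  { destruct (Rlt_le_dec 1 Y) as [|Hle]; auto. exfalso.
    assert (Y^3 <= Y) by nra.
    assert (0 < 2*B^2 - 2*B + 1) by nra.
    assert ((2*B^2 - 2*B + 1) < 1) by nra.
    nra. }
  assert (H2 : Y < 2).
  { destruct (Rlt_le_dec Y 2) as [|Hle]; auto. exfalso.
    assert (E : 2*B^2*Y^3 + (1-2*B)*Y - 1 - (16*B^2 - 4*B + 1)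
       = (Y-2)*(2*B^2*(Y^2+2*Y+4) + 1 - 2*B)) by ring.
    assert (0 < 16*B^2 - 4*B + 1) by nra.
    assert (0 < 2*B^2*(Y^2+2*Y+4) + 1 - 2*B) by nra.
    nra. }
  repeat split; auto.
  assert (E : 2*B*Y*(B*Y^2 - 1) = 1 - Y) by nra.
  assert (0 < 2*B*Y) by nra.
  nra.
Qed.

Lemma hM_min (B Y y : R) : 0 < B < 1 -> 0 < Y -> gM B Y = 0 -> 0 <= y ->
  hM B Y <= hM B y.
Proof.
  intros HB HY Hg Hy. destruct (Ys_bounds B Y HB HY Hg) as [H1 [H2 H3]].
  unfold hM, fM. unfold gM in Hg.
  assert (E : (B*y^2)^2 - 2*(B*y^2) + (y^2 - 2*y) - ((B*Y^2)^2 - 2*(B*Y^2) + (Y^2 - 2*Y))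
     = (y-Y)^2 * (B^2*(y^2 + 2*y*Y + 3*Y^2) + 1 - 2*B) + 2*(2*B^2*Y^3 + (1-2*B)*Y - 1)*(y-Y))
    by ring.
  assert (0 <= B^2*(y^2 + 2*y*Y)) by (apply Rmult_le_pos; nra).
  assert (0 < 3*B^2*Y^2 + 1 - 2*B).
  { assert (1 <= Y^2) by nra. assert (0 <= B^2) by nra.
    assert (3*B^2 <= 3*B^2*Y^2) by nra. nra. }
  assert (0 <= (y-Y)^2) by apply pow2_ge_0.
  rewrite Hg in E.
  assert (0 <= (y-Y)^2 * (B^2*(y^2 + 2*y*Y + 3*Y^2) + 1 - 2*B)) by (apply Rmult_le_pos; nra).
  lra.
Qed.

Lemma PW_M (B Y Y1 Y2 Yc : R) : 0 < B < 1 -> 0 < Y -> gM B Y = 0 ->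
  0 < Y1 -> 0 < Y2 -> 0 < Yc -> Yc^2 = Y1*Y2 ->
  hM B Y <= fM (B*Y1*Y2) + /2 * (fM Y1 + fM Y2).
Proof.
  intros HB HY Hg H1 H2 Hc Hcc.
  assert (HS : 2*Yc <= Y1 + Y2).
  { assert (Hq := pow2_ge_0 (Y1-Y2)). assert ((2*Yc)^2 <= (Y1+Y2)^2) by nra. nra. }
  replace (B*Y1*Y2) with (B*Yc^2) by (rewrite Hcc; ring).
  destruct (Rle_lt_dec 1 Yc).
  - assert (hM B Y <= hM B Yc) by (apply hM_min; auto; lra).
    unfold hM in *. unfold fM in *.
    assert (Hq1 := pow2_ge_0 (Y1-Yc)). assert (Hq2 := pow2_ge_0 (Y2-Yc)).
    nra.
  - assert (hM B Y <= hM B 1) by (apply hM_min; auto; lra).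
    unfold hM in *. unfold fM in *.
    assert (Hq1 := pow2_ge_0 (Y1-1)). assert (Hq2 := pow2_ge_0 (Y2-1)).
    assert (Yc^2 <= 1) by nra. assert (B*Yc^2 <= B) by nra.
    assert (0 <= B*Yc^2) by nra.
    assert ((B*Yc^2)^2 - 2*(B*Yc^2) >= B^2 - 2*B) by nra.
    nra.
Qed.

Lemma C4_M (B Y : R) : 0 < B < 1 -> 0 < Y -> gM B Y = 0 ->
  fM (B*Y^2) > 2 * fM (B*Y).
Proof.
  intros HB HY Hg. destruct (Ys_bounds B Y HB HY Hg) as [H1 [H2 H3]].
  unfold gM in Hg. unfold fM.
  assert (HL : Y*(1+2*B+4*B^2) < 1+8*B).
  { set (D := 1+2*B+4*B^2).
    assert (HD : 0 < D) by (unfold D; nra).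
    destruct (Rlt_le_dec (Y*D) (1+8*B)) as [|Hle]; auto. exfalso.
    set (r := (1+8*B)/D).
    assert (Hr : r <= Y) by (unfold r; apply Rmult_le_reg_r with D; auto; field_simplify; lra).
    assert (Hr1 : 1 <= r) by (unfold r; apply Rmult_le_reg_r with D; auto; field_simplify; unfold D; nra).
    assert (Hgr : 0 < 2*B^2*r^3 + (1-2*B)*r - 1).
    { assert (E : (2*B^2*r^3 + (1-2*B)*r - 1) * D^3 =
        4*B - 2*B^2 + 16*B^3 + 208*B^4 + 768*B^5 - 320*B^6).
      { unfold r, D. field. fold D. lra. }
      assert (0 < 4*B - 2*B^2 + 16*B^3 + 208*B^4 + 768*B^5 - 320*B^6).
      { assert (0 < B^2) by nra. assert (0 < B^3) by nra. assert (0 < B^4) by nra.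
        assert (0 < B^5) by nra. assert (B^6 < B^5) by nra. nra. }
      assert (0 < D^3) by (apply pow_lt; auto).
      nra. }
    assert (E : 2*B^2*Y^3 + (1-2*B)*Y - 1 - (2*B^2*r^3 + (1-2*B)*r - 1)
       = (Y-r)*(2*B^2*(Y^2+Y*r+r^2) + 1 - 2*B)) by ring.
    assert (0 < 2*B^2*(Y^2+Y*r+r^2) + 1 - 2*B).
    { assert (3 <= Y^2+Y*r+r^2) by nra.
      assert (2*B^2*3 <= 2*B^2*(Y^2+Y*r+r^2)) by (apply Rmult_le_compat_l; nra).
      nra. }
    nra. }
  assert (E : (B*Y^2)^2 - 2*(B*Y^2) - 2*((B*Y)^2 - 2*(B*Y))
     = B*Y*(B*Y^3 - 2*Y - 2*B*Y + 4)) by ring.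
  assert (E2 : 2*B*(B*Y^3 - 2*Y - 2*B*Y + 4) = 1 + 8*B - Y*(1+2*B+4*B^2)) by nra.
  assert (0 < B*Y^3 - 2*Y - 2*B*Y + 4) by nra.
  assert (0 < B*Y) by nra.
  nra.
Qed.

Lemma C5_M (B Y u : R) : 0 < B < 1 -> 0 < Y -> gM B Y = 0 -> 0 < u ->
  fM (B*Y*u) - fM u - 3/2 * fM (B*u^2) + fM Y + /2 * fM (B*Y^2) <= 0.
Proof.
  intros HB HY Hg Hu. destruct (Ys_bounds B Y HB HY Hg) as [H1 [H2 H3]].
  unfold gM in Hg. unfold fM.
  assert (E : (B*Y*u)^2 - 2*(B*Y*u) - (u^2 - 2*u) - 3/2 * ((B*u^2)^2 - 2*(B*u^2))
      + (Y^2 - 2*Y) + /2 * ((B*Y^2)^2 - 2*(B*Y^2))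
    = (u-Y)^2 * (-3/2*B^2*u^2 - 3*B^2*Y*u + 3*B - 1 - 7/2*B^2*Y^2)
      - 2*(2*B^2*Y^3 + (1-2*B)*Y - 1)*(u-Y)) by field.
  assert (Hc : 3*B - 1 - 7/2*B^2*Y^2 <= 0).
  { assert (E2 : 2*Y*(3*B - 1 - 7/2*B^2*Y^2) = 2*Y*(3*B-1) - 7/2*(1 + (2*B-1)*Y)) by nra.
    assert (2*Y*(3*B-1) - 7/2*(1 + (2*B-1)*Y) <= 0) by nra.
    nra. }
  assert (0 <= (u-Y)^2) by apply pow2_ge_0.
  assert (0 <= B^2*u^2) by nra.
  assert (0 <= B^2*Y*u) by (assert (0 <= B^2) by nra; nra).
  nra.
Qed.

Definition YM (d1 k2 z : R) := exp (- k2 * (z - d1)).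

Lemma J1M (d1 k1 k2 z : R) : J1 (MorsePot d1 k1 k2) z = k1 * fM (YM d1 k2 z).
Proof. simpl. unfold fM, YM. ring. Qed.

Lemma YM_add (d1 k2 a b : R) : YM d1 k2 (a + b) = exp (- k2 * d1) * YM d1 k2 a * YM d1 k2 b.
Proof. unfold YM. rewrite <- !exp_plus. f_equal. ring. Qed.

Lemma J2M (d1 k1 k2 z : R) :
  J2 (MorsePot d1 k1 k2) z = k1 * fM (exp (- k2 * d1) * YM d1 k2 z ^ 2).
Proof. unfold J2. rewrite J1M. replace (2*z) with (z+z) by ring. rewrite YM_add. f_equal. f_equal. ring. Qed.

Lemma J2Mh (d1 k1 k2 a b : R) :
  J2 (MorsePot d1 k1 k2) ((a+b)/2) = k1 * fM (exp (- k2 * d1) * YM d1 k2 a * YM d1 k2 b).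
Proof. unfold J2. rewrite J1M. replace (2*((a+b)/2)) with (a+b) by field. rewrite YM_add. reflexivity. Qed.

Lemma YM_pos d1 k2 z : 0 < YM d1 k2 z.
Proof. apply exp_pos. Qed.

Lemma YM_mid d1 k2 a b : YM d1 k2 ((a+b)/2) ^ 2 = YM d1 k2 a * YM d1 k2 b.
Proof. unfold YM. simpl. rewrite Rmult_1_r, <- !exp_plus. f_equal. field. Qed.

Lemma fM_neg (k x : R) : 0 < k -> 0 < x < 2 -> k * fM x < 0.
Proof. intros. assert (fM x < 0) by (unfold fM; nra). nra. Qed.

Lemma main_M (d1 k1 k2 delta1 gamma : R) : 0 < d1 -> 0 < k1 -> 0 < k2 ->
  unique_minimizer (MorsePot d1 k1 k2) (J1 (MorsePot d1 k1 k2)) delta1 ->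
  unique_minimizer (MorsePot d1 k1 k2) (J0 (MorsePot d1 k1 k2)) gamma ->
  Concl (MorsePot d1 k1 k2) delta1 gamma.
Proof.
  intros Hd1 Hk1 Hk2 Hd Hg.
  set (p := MorsePot d1 k1 k2) in *.
  set (B := exp (- k2 * d1)).
  assert (HB : 0 < B < 1).
  { split; [apply exp_pos|]. unfold B. rewrite <- exp_0. apply exp_increasing. nra. }
  set (Y := YM d1 k2).
  assert (Hdd : delta1 = d1).
  { apply (ident1 p); [exact I| |exact Hd].
    intros z _. unfold p. rewrite !J1M. fold Y.
    assert (Y d1 = 1) by (unfold Y, YM; rewrite Rminus_diag, Rmult_0_r; apply exp_0).
    rewrite H. apply Rmult_le_compat_l; [lra|].
    unfold fM. assert (Hq := pow2_ge_0 (Y z - 1)). nra. }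
  destruct (IVT (gM B) 0 2) as [Ys [HYs1 HYs2]].
  { unfold gM. reg. }
  { lra. }
  { unfold gM. lra. }
  { unfold gM. nra. }
  assert (HYsp : 0 < Ys).
  { destruct HYs1 as [[Hlt|Heq] _]; auto. subst Ys. unfold gM in HYs2. lra. }
  set (zs := d1 - ln Ys / k2).
  assert (Hzs : Y zs = Ys).
  { unfold Y, YM, zs. replace (- k2 * (d1 - ln Ys / k2 - d1)) with (ln Ys) by (field; lra).
    apply exp_ln; auto. }
  destruct (ident p (k1 * hM B Ys) zs gamma) as [Hgs HJ0].
  { exact I. }
  { unfold JCB, p. rewrite J1M, J2M. fold B Y. rewrite Hzs. unfold hM. lra. }
  { intros z1 z2 _ _. unfold p. rewrite !J1M. rewrite YM_add. fold B Y.
    assert (HPW := PW_M B Ys (Y z1) (Y z2) (Y ((z1+z2)/2)) HB HYsp HYs2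
      (YM_pos _ _ _) (YM_pos _ _ _) (YM_pos _ _ _) (YM_mid _ _ _ _)).
    nra. }
  { exact Hg. }
  destruct (Ys_bounds B Ys HB HYsp HYs2) as [Hb1 [Hb2 Hb3]].
  assert (HYg : Y gamma = Ys) by (rewrite Hgs; exact Hzs).
  assert (HYd : Y delta1 = 1) by (rewrite Hdd; unfold Y, YM; rewrite Rminus_diag, Rmult_0_r; apply exp_0).
  unfold Concl. unfold p in *.
  split; [|split; [|split; [|split; [|split]]]].
  - rewrite J1M. fold Y. rewrite HYg. apply fM_neg; lra.
  - rewrite J2M. fold B Y. rewrite HYg. apply fM_neg; [lra|]. split; [apply Rmult_lt_0_compat; [lra| apply pow_lt; lra] | lra].
  - rewrite J2M. fold B Y. rewrite HYd. apply fM_neg; [lra|]. rewrite pow1, Rmult_1_r. lra.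
  - rewrite J2M, J2Mh. fold B Y. rewrite HYg, HYd.
    assert (H4 := C4_M B Ys HB HYsp HYs2).
    replace (B * 1 * Ys) with (B * Ys) by ring. nra.
  - intros t _. unfold JCB. rewrite HJ0, J2Mh, !J1M, J2M. fold B Y. rewrite HYg.
    assert (H5 := C5_M B Ys (Y t) HB HYsp HYs2 (YM_pos _ _ _)).
    unfold hM.
    assert (E : k1 * fM (B * Ys * Y t) + / 2 * (k1 * fM Ys + k1 * fM (Y t)) -
      k1 * (fM (B * Ys ^ 2) + fM Ys) -
      3 / 2 * (k1 * fM (Y t) + k1 * fM (B * Y t ^ 2) - k1 * (fM (B * Ys ^ 2) + fM Ys))
      = k1 * (fM (B*Ys*Y t) - fM (Y t) - 3/2 * fM (B*(Y t)^2) + fM Ys + /2 * fM (B*Ys^2)))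
      by field.
    rewrite E. nra.
  - intros theta Hth.
    set (U := 2 / (B * Ys)).
    assert (HBY : 0 < B * Ys) by nra.
    assert (HBY1 : B * Ys < 1) by nra.
    assert (HU1 : / B < U).
    { unfold U. apply Rmult_lt_reg_r with (B*Ys); auto. field_simplify; nra. }
    assert (HU2 : 2 < U).
    { unfold U. apply Rmult_lt_reg_r with (B*Ys); auto. field_simplify; nra. }
    assert (HiB : 1 < / B).
    { apply Rmult_lt_reg_r with B; [lra|]. rewrite Rinv_l by lra. lra. }
    set (c := Rmin (fM U) (fM U - fM (/ B))).
    assert (Hc : 0 < c).
    { unfold c. apply Rmin_glb_lt; unfold fM; nra. }
    exists (k1 * c / 2). split; [apply Rdiv_lt_0_compat; nra|].
    intros t _ Ht.
    rewrite (Rplus_comm t gamma), J2Mh. fold B Y. rewrite HYg.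
    rewrite !J1M in Ht. fold Y in Ht.
    set (w := Y theta) in *. set (u := Y t) in *.
    assert (Hw : 0 < w) by apply YM_pos.
    assert (Hu : 0 < u) by apply YM_pos.
    assert (HBw : B * w < 1).
    { unfold w, Y, YM, B. rewrite <- exp_plus, <- exp_0. apply exp_increasing. nra. }
    assert (Hfw : fM w <= fM U - c).
    { destruct (Rle_lt_dec w 1).
      - assert (c <= fM U) by apply Rmin_l. unfold fM in *. nra.
      - assert (c <= fM U - fM (/ B)) by apply Rmin_r.
        assert (w < / B).
        { apply Rmult_lt_reg_r with B; [lra|]. rewrite Rinv_l by lra. lra. }
        assert (fM w < fM (/ B)) by (unfold fM; nra).
        lra. }
    assert (Hut : u < U).
    { destruct (Rlt_le_dec u U) as [|Hle]; auto. exfalso.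
      assert (fM U <= fM u) by (unfold fM; nra).
      assert (k1 * fM u < k1 * fM w + k1 * c) by lra.
      assert (fM u < fM w + c).
      { apply Rmult_lt_reg_l with k1; lra. }
      lra. }
    assert (B * Ys * u < 2).
    { unfold U in Hut. apply Rmult_lt_compat_l with (r := B*Ys) in Hut; auto.
      replace (B * Ys * (2 / (B * Ys))) with 2 in Hut by (field; lra). lra. }
    assert (0 < B * Ys * u) by nra.
    assert (fM (B * Ys * u) < 0) by (unfold fM; nra).
    nra.
Qed.

Theorem proposition5p10 (p : potential) (delta1 gamma : R) :
  valid p ->
  unique_minimizer p (J1 p) delta1 ->
  unique_minimizer p (J0 p) gamma ->
  J1 p gamma < 0 /\
  J2 p gamma < 0 /\
  J2 p delta1 < 0 /\
  J2 p gamma > 2 * J2 p ((delta1 + gamma) / 2) /\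
  (forall t, dom p t ->
     J2 p ((gamma + t) / 2) + / 2 * (J1 p gamma + J1 p t) - J0 p gamma
       - 3 / 2 * (JCB p t - J0 p gamma) <= 0) /\
  (forall theta, 0 < theta ->
     exists eta, 0 < eta /\
       forall t, dom p t -> J1 p t < J1 p theta + 2 * eta ->
         J2 p ((t + gamma) / 2) < 0).
Proof.
  intros Hv Hd Hg. destruct p as [k1 k2 | d1 k1 k2]; simpl in Hv.
  - exact (main_LJ k1 k2 delta1 gamma (proj1 Hv) (proj2 Hv) Hd Hg).
  - destruct Hv as [H1 [H2 H3]].
    exact (main_M d1 k1 k2 delta1 gamma H1 H2 H3 Hd Hg).
Qed.
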